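(* Let $(b,0)$ be a tree over $X$. Then $X$ is totally bounded with respect to every metric on $X$ which is intrinsic with respect to some measure $m$ on $X$ with $m(X)<\infty$ if and only if every function of finite energy is bounded, i.e. $\widetilde D\subseteq\ell^\infty(X)$.
   Context: A weighted graph $(b,c)$ over a countably infinite set $X$ consists of a symmetric $b:X\times X\to[0,\infty)$ with $b(x,x)=0$ and $\sum_y b(x,y)<\infty$ for all $x$, and $c:X\to[0,\infty)$; here $c\equiv0$. A path is a finite sequence $(x_0,\dots,x_n)$ of pairwise distinct vertices with $b(x_{i-1},x_i)>0$. The graph is a tree if it is connected (any two distinct vertices are joined by a path) and there is no path $(x_0,\dots,x_n)$ with $n\ge2$ and $b(x_n,x_0)>0$. $\widetilde Q(f)=\frac12\sum_{x,y}b(x,y)|f(x)-f(y)|^2$ and $\widetilde D=\{f:X\to\mathbb C:\widetilde Q(f)<\infty\}$. A measure on $X$ is $m:X\to[0,\infty)$ with $m(A)=\sum_{x\in A}m(x)$; a metric $\sigma$ on $X$ is intrinsic with respect to $m$ if $\frac12\sum_y b(x,y)\sigma(x,y)^2\le m(x)$ for all $x$. *)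

(* Defs.v *)
From Stdlib Require Import Reals List.
Import ListNotations.
Open Scope R_scope.

(* Complex numbers represented as pairs (real part, imaginary part). *)
Definition Cpx := (R * R)%type.
Definition Cmod (z : Cpx) : R := sqrt (fst z ^ 2 + snd z ^ 2).
Definition Csub (z w : Cpx) : Cpx := (fst z - fst w, snd z - snd w).

Fixpoint lsum {A : Type} (g : A -> R) (l : list A) : R :=
  match l with [] => 0 | x :: t => g x + lsum g t end.

(* For a nonnegative family g over A:  sum_{a in A} g a <= c, i.e. every
   finite partial sum (over distinct indices) is <= c (sum = sup of finite sums). *)
Definition nnsum_le {A : Type} (g : A -> R) (c : R) : Prop :=
  forall l : list A, NoDup l -> lsum g l <= c.

Definition nn_summable {A : Type} (g : A -> R) : Prop :=
  exists c : R, nnsum_le g c.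

Definition countably_infinite (X : Type) : Prop :=
  exists e : nat -> X,
    (forall n k, e n = e k -> n = k) /\ (forall x, exists n, e n = x).

(* Weighted graph (b, 0) over X (killing term c = 0 plays no role). *)
Definition weighted_graph {X : Type} (b : X -> X -> R) : Prop :=
  (forall x y, 0 <= b x y) /\
  (forall x y, b x y = b y x) /\
  (forall x, b x x = 0) /\
  (forall x, nn_summable (b x)).

Fixpoint chain {X : Type} (b : X -> X -> R) (l : list X) : Prop :=
  match l with
  | x :: ((y :: _) as t) => 0 < b x y /\ chain b t
  | _ => True
  end.

Definition is_path {X : Type} (b : X -> X -> R) (l : list X) : Prop :=
  NoDup l /\ chain b l.

Definition connected {X : Type} (b : X -> X -> R) : Prop :=
  forall x y : X, x <> y -> exists mid : list X, is_path b (x :: mid ++ [y]).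

Definition is_tree {X : Type} (b : X -> X -> R) : Prop :=
  connected b /\
  forall (x0 xn : X) (mid : list X),
    is_path b (x0 :: mid ++ [xn]) -> mid <> [] -> ~ (0 < b xn x0).

Definition is_measure {X : Type} (m : X -> R) : Prop := forall x, 0 <= m x.

Definition is_metric {X : Type} (s : X -> X -> R) : Prop :=
  (forall x y, 0 <= s x y) /\
  (forall x y, s x y = 0 <-> x = y) /\
  (forall x y, s x y = s y x) /\
  (forall x y z, s x z <= s x y + s y z).

Definition intrinsic {X : Type} (b : X -> X -> R) (m : X -> R) (s : X -> X -> R) : Prop :=
  forall x, nnsum_le (fun y => / 2 * (b x y * s x y ^ 2)) (m x).

Definition totally_bounded {X : Type} (s : X -> X -> R) : Prop :=
  forall eps : R, 0 < eps ->
    exists F : list X, forall x : X, exists y : X, In y F /\ s x y < eps.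

Definition finite_energy {X : Type} (b : X -> X -> R) (f : X -> Cpx) : Prop :=
  nn_summable (fun p : X * X =>
    / 2 * (b (fst p) (snd p) * Cmod (Csub (f (fst p)) (f (snd p))) ^ 2)).

Definition bounded_fun {X : Type} (f : X -> Cpx) : Prop :=
  exists M : R, forall x, Cmod (f x) <= M.

(* Main.v *)
Require Import Defs.
From Stdlib Require Import Reals List Lra Lia Psatz ClassicalEpsilon FinFun.
Import ListNotations.
Open Scope R_scope.


Lemma lsum_app {A} (g : A -> R) l1 l2 : lsum g (l1 ++ l2) = lsum g l1 + lsum g l2.
Proof. induction l1; simpl; [lra|]. rewrite IHl1; lra. Qed.

Lemma lsum_nonneg {A} (g : A -> R) l : (forall x, 0 <= g x) -> 0 <= lsum g l.
Proof. intros H; induction l; simpl; [lra|]. specialize (H a); lra. Qed.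

Lemma lsum_scal {A} (g : A -> R) c l : lsum (fun x => c * g x) l = c * lsum g l.
Proof. induction l; simpl; [lra|]. rewrite IHl; lra. Qed.

Lemma lsum_le {A} (g h : A -> R) l : (forall x, g x <= h x) -> lsum g l <= lsum h l.
Proof. intros H; induction l; simpl; [lra|]. specialize (H a); lra. Qed.

Lemma lsum_plus {A} (g h : A -> R) l : lsum (fun x => g x + h x) l = lsum g l + lsum h l.
Proof. induction l; simpl; [lra|]. rewrite IHl; lra. Qed.

Lemma lsum_map {A B} (g : B -> R) (h : A -> B) l : lsum g (map h l) = lsum (fun x => g (h x)) l.
Proof. induction l; simpl; [lra|]. rewrite IHl; lra. Qed.

Lemma lsum_ext {A} (g h : A -> R) l : (forall x, In x l -> g x = h x) -> lsum g l = lsum h l.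
Proof. intros H; induction l; simpl; [lra|]. rewrite H, IHl; [lra| intros; apply H; simpl; auto | simpl; auto]. Qed.

Lemma lsum_incl {A} (g : A -> R) l1 : (forall x, 0 <= g x) -> NoDup l1 ->
  forall l2, incl l1 l2 -> lsum g l1 <= lsum g l2.
Proof.
  intros Hg; induction 1 as [|a l1 Ha Hnd IH]; intros l2 Hi; simpl.
  - apply lsum_nonneg; auto.
  - assert (In a l2) by (apply Hi; left; auto).
    destruct (in_split _ _ H) as [A1 [B1 ->]].
    rewrite lsum_app; simpl.
    assert (lsum g l1 <= lsum g (A1 ++ B1)).
    { apply IH. intros x Hx. assert (In x (A1 ++ a :: B1)) by (apply Hi; right; auto).
      apply in_app_or in H0; apply in_or_app; destruct H0 as [H0|H0]; auto.
      destruct H0; [subst; contradiction|auto]. }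
    rewrite lsum_app in H0; lra.
Qed.

Definition psums {A} (g : A -> R) := fun r => exists l, NoDup l /\ r = lsum g l.

Definition tsum {A} (g : A -> R) : R :=
  match excluded_middle_informative (nn_summable g) with
  | left H =>
      proj1_sig (completeness (psums g)
        (match H with ex_intro _ c Hc =>
           ex_intro _ c (fun r (Hr : psums g r) =>
             match Hr with ex_intro _ l (conj Hl Heq) => eq_ind_r (fun z => z <= c) (Hc l Hl) Heq end) end)
        (ex_intro _ 0 (ex_intro _ [] (conj (NoDup_nil _) eq_refl))))
  | right _ => 0
  end.

Lemma tsum_ge {A} (g : A -> R) l : nn_summable g -> NoDup l -> lsum g l <= tsum g.
Proof.
  intros H Hl. unfold tsum. destruct excluded_middle_informative; [|contradiction].
  destruct completeness as [L [HL1 HL2]]; simpl. apply HL1. exists l; auto.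
Qed.

Lemma tsum_le {A} (g : A -> R) c : nn_summable g -> nnsum_le g c -> tsum g <= c.
Proof.
  intros H Hc. unfold tsum. destruct excluded_middle_informative; [|contradiction].
  destruct completeness as [L [HL1 HL2]]; simpl. apply HL2.
  intros r [l [Hl ->]]. apply Hc; auto.
Qed.

Lemma tsum_nonneg {A} (g : A -> R) : 0 <= tsum g.
Proof.
  unfold tsum. destruct excluded_middle_informative; [|lra].
  destruct completeness as [L [HL1 HL2]]; simpl. apply HL1. exists []; split; [constructor|reflexivity].
Qed.

Definition deceq {X} (x y : X) : {x = y} + {x <> y} := excluded_middle_informative (x = y).

Lemma nodup_snd {X} (x : X) (P : list (X * X)) : NoDup P -> (forall p, In p P -> fst p = x) -> NoDup (map snd P).
Proof.
  induction 1 as [|[a b] Q Hn Hnd IH]; intros Hf; simpl; constructor.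
  - intros Hin. apply in_map_iff in Hin. destruct Hin as [[a' b'] [Hb Hin]]. simpl in Hb; subst.
    assert (a = x) by (apply (Hf (a,b)); left; auto).
    assert (a' = x) by (apply (Hf (a',b)); right; auto). subst. auto.
  - apply IH. intros; apply Hf; right; auto.
Qed.

Lemma group_fwd {X} (g : X * X -> R) (M : X -> R) C :
  (forall p, 0 <= g p) ->
  (forall x, nnsum_le (fun y => g (x, y)) (M x)) ->
  (forall K, NoDup K -> lsum M K <= C) ->
  nnsum_le g C.
Proof.
  intros Hg HM HC.
  assert (Main : forall n P, (length P <= n)%nat -> NoDup P ->
     exists K, NoDup K /\ (forall k, In k K -> exists y, In (k, y) P) /\ lsum g P <= lsum M K).
  { induction n as [|n IH]; intros P Hlen Hnd.
    - destruct P; simpl in Hlen; [|lia]. exists []; simpl; split; [constructor|split; [tauto|lra]].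
    - destruct P as [|[x y] P'].
      + exists []; simpl; split; [constructor|split; [tauto|lra]].
      + set (P0 := (x, y) :: P').
        set (f1 := fun p : X * X => if deceq (fst p) x then true else false).
        set (P1 := filter f1 P0).
        set (P2 := filter (fun p => negb (f1 p)) P0).
        assert (Hsplit : lsum g P0 = lsum g P1 + lsum g P2).
        { unfold P1, P2. clear. induction P0; simpl; [lra|].
          destruct (f1 a); simpl; rewrite IHP0; lra. }
        assert (Hlen2 : (length P2 <= n)%nat).
        { unfold P2, P0. simpl. unfold f1 at 1. simpl. destruct (deceq x x); [|congruence]. simpl.
          simpl in Hlen. pose proof (filter_length_le (fun p => negb (f1 p)) P'). lia. }
        assert (Hnd2 : NoDup P2) by (apply NoDup_filter; auto).
        destruct (IH P2 Hlen2 Hnd2) as [K2 [HK2 [HK2i HK2s]]].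
        exists (x :: K2). split; [|split].
        * constructor; auto. intros Hx. destruct (HK2i x Hx) as [y' Hy'].
          unfold P2 in Hy'. apply filter_In in Hy'. destruct Hy' as [_ Hy'].
          unfold f1 in Hy'; simpl in Hy'. destruct (deceq x x); simpl in Hy'; congruence.
        * intros k [<-|Hk]; [exists y; left; auto|].
          destruct (HK2i k Hk) as [y' Hy']. exists y'. unfold P2 in Hy'. apply filter_In in Hy'; tauto.
        * simpl. change (lsum g P0 <= M x + lsum M K2). rewrite Hsplit.
          assert (lsum g P1 <= M x).
          { assert (E : lsum g P1 = lsum (fun y0 => g (x, y0)) (map snd P1)).
            { rewrite lsum_map. apply lsum_ext. intros [a b] Hab. unfold P1 in Hab.
              apply filter_In in Hab. destruct Hab as [_ Hab]. unfold f1 in Hab; simpl in Hab.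
              destruct (deceq a x); [subst; reflexivity|discriminate]. }
            rewrite E. apply HM.
            assert (Hnd1 : NoDup P1) by (apply NoDup_filter; auto).
            apply (nodup_snd x). auto. intros [a b] Hab. unfold P1 in Hab.
              apply filter_In in Hab. destruct Hab as [_ Hab]. unfold f1 in Hab; simpl in Hab.
              destruct (deceq a x); [subst; reflexivity|discriminate]. }
          lra. }
  intros P HP. destruct (Main _ P (le_n _) HP) as [K [HK [_ Hs]]]. specialize (HC K HK). lra.
Qed.

Lemma nodup_map_pair {X} (a : X) (l : list X) : NoDup l -> NoDup (map (fun y => (a, y)) l).
Proof. intros H; apply FinFun.Injective_map_NoDup; auto. intros u v Huv; inversion Huv; auto. Qed.

Lemma group_inv {X} (g : X * X -> R) :
  (forall p, 0 <= g p) ->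
  forall K, NoDup K -> forall C,
  (forall P, NoDup P -> (forall p, In p P -> In (fst p) K) -> lsum g P <= C) ->
  lsum (fun x => tsum (fun y => g (x, y))) K <= C.
Proof.
  intros Hg K; induction 1 as [|a K Ha Hnd IH]; intros C HC; simpl.
  - specialize (HC [] (NoDup_nil _)). simpl in HC. apply HC. tauto.
  - assert (Hrow : forall P, NoDup P -> (forall p, In p P -> In (fst p) K) ->
               nnsum_le (fun y => g (a, y)) (C - lsum g P)).
    { intros P HP HPK l Hl.
      assert (lsum g (P ++ map (fun y => (a, y)) l) <= C).
      { apply HC.
        - apply NoDup_app; auto. apply nodup_map_pair; auto.
          intros p Hp Hp2. apply in_map_iff in Hp2. destruct Hp2 as [y [<- _]].
          apply Ha. apply (HPK _ Hp).
        - intros p Hp. apply in_app_or in Hp. destruct Hp as [Hp|Hp].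
          + right; auto.
          + apply in_map_iff in Hp. destruct Hp as [y [<- _]]. left; auto. }
      rewrite lsum_app, lsum_map in H. lra. }
    assert (Hsum : nn_summable (fun y => g (a, y))).
    { exists (C - lsum g []). apply Hrow; [constructor|simpl; tauto]. }
    assert (lsum (fun x => tsum (fun y => g (x, y))) K <= C - tsum (fun y => g (a, y))).
    { apply IH. intros P HP HPK.
      assert (tsum (fun y => g (a, y)) <= C - lsum g P) by (apply tsum_le; auto).
      lra. }
    lra.
Qed.

Lemma lsum_swap {X} (g : X * X -> R) P :
  lsum g P = lsum (fun p => g (snd p, fst p)) (map (fun p => (snd p, fst p)) P).
Proof. rewrite lsum_map. apply lsum_ext. intros [a b] _. reflexivity. Qed.

Lemma nodup_swap {X} (P : list (X * X)) : NoDup P -> NoDup (map (fun p => (snd p, fst p)) P).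
Proof. intros H; apply FinFun.Injective_map_NoDup; auto. intros [a b] [c d] E; inversion E; auto. Qed.

Lemma index_bound {X} (idx : X -> nat) (h : nat -> R) K :
  (forall x y, idx x = idx y -> x = y) -> (forall k, 0 <= h k) -> NoDup K ->
  exists N, lsum (fun x => h (idx x)) K <= lsum h (seq 0 N).
Proof.
  intros Hinj Hh HK.
  exists (S (list_max (map idx K))).
  rewrite <- lsum_map. apply lsum_incl; auto.
  - apply FinFun.Injective_map_NoDup; auto.
  - intros k Hk. apply in_seq. split; [lia|].
    pose proof (list_max_le (map idx K) (list_max (map idx K))) as [H1 _].
    specialize (H1 (le_n _)). rewrite Forall_forall in H1. specialize (H1 k Hk). lia.
Qed.

Lemma geom_sum a N : lsum (fun k => (/2) ^ k) (seq a N) <= 2 * (/2) ^ a.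
Proof.
  revert a; induction N; intros a; simpl.
  - pose proof (pow_le (/2) a). lra.
  - specialize (IHN (S a)). simpl in IHN. lra.
Qed.

Lemma lsum_In_le {A} (g : A -> R) l x : (forall y, 0 <= g y) -> In x l -> g x <= lsum g l.
Proof.
  intros Hg; induction l; simpl; [tauto|]. intros [->|H].
  - pose proof (lsum_nonneg g l Hg); lra.
  - specialize (IHl H). specialize (Hg a); lra.
Qed.

Lemma rmin_tri a b c : Rmin (Rabs (a - c)) 1 <= Rmin (Rabs (a - b)) 1 + Rmin (Rabs (b - c)) 1.
Proof.
  pose proof (Rabs_triang (a - b) (b - c)). replace (a - b + (b - c)) with (a - c) in H by ring.
  pose proof (Rabs_pos (a-b)); pose proof (Rabs_pos (b-c)).
  unfold Rmin; repeat destruct Rle_dec; lra.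
Qed.

Lemma dir1_real (X : Type) (b : X -> X -> R) (Hb : weighted_graph b)
  (idx : X -> nat) (Hinj : forall x y, idx x = idx y -> x = y)
  (TBH : forall (m : X -> R) (s : X -> X -> R),
      is_measure m -> nn_summable m -> is_metric s -> intrinsic b m s ->
      totally_bounded s)
  (g : X -> R) (c : R)
  (Hg : nnsum_le (fun p => /2 * (b (fst p) (snd p) * (g (fst p) - g (snd p)) ^ 2)) c) :
  exists M, forall x, Rabs (g x) <= M.
Proof.
  destruct Hb as [Hb0 [Hbs [Hbd Hbr]]].
  set (B := fun x => proj1_sig (constructive_indefinite_description _ (Hbr x))).
  assert (HB : forall x, nnsum_le (b x) (B x)).
  { intros x. unfold B. destruct constructive_indefinite_description; simpl; auto. }
  assert (HB0 : forall x, 0 <= B x).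
  { intros x. specialize (HB x [] (NoDup_nil _)). simpl in HB. lra. }
  set (w := fun x => sqrt ((/2) ^ (idx x) / (1 + B x))).
  assert (Hw : forall x, 0 < w x).
  { intros x. unfold w. apply sqrt_lt_R0. apply Rdiv_lt_0_compat.
    apply pow_lt; lra. specialize (HB0 x); lra. }
  assert (Hw2 : forall x, w x ^ 2 * B x <= (/2) ^ (idx x)).
  { intros x. unfold w. rewrite pow2_sqrt.
    2:{ apply Rlt_le, Rdiv_lt_0_compat. apply pow_lt; lra. specialize (HB0 x); lra. }
    specialize (HB0 x). pose proof (pow_lt (/2) (idx x)) as Hp.
    assert (0 < (/2) ^ idx x) by (apply Hp; lra).
    replace ((/2) ^ idx x / (1 + B x) * B x) with ((/2) ^ idx x - (/2) ^ idx x / (1 + B x)) by (field; lra).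
    assert (0 <= (/2) ^ idx x / (1 + B x)) by (apply Rlt_le, Rdiv_lt_0_compat; lra). lra. }
  set (dl := fun x y => if Nat.eq_dec (idx x) (idx y) then 0 else Rmax (w x) (w y)).
  set (s := fun x y => Rmin (Rabs (g x - g y)) 1 + dl x y).
  assert (Hdl0 : forall x y, 0 <= dl x y).
  { intros x y; unfold dl; destruct Nat.eq_dec; [lra|]. pose proof (Hw x). pose proof (Rmax_l (w x) (w y)). lra. }
  assert (Hdl2 : forall x y, dl x y ^ 2 <= w x ^ 2 + w y ^ 2).
  { intros x y; unfold dl; destruct Nat.eq_dec; [nra|]. pose proof (Hw x); pose proof (Hw y).
    unfold Rmax; destruct Rle_dec; nra. }
  assert (Hmin0 : forall x y, 0 <= Rmin (Rabs (g x - g y)) 1).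
  { intros; unfold Rmin; destruct Rle_dec; [apply Rabs_pos|lra]. }
  assert (Hmin2 : forall x y, Rmin (Rabs (g x - g y)) 1 ^ 2 <= (g x - g y) ^ 2).
  { intros x y. pose proof (Rmin_l (Rabs (g x - g y)) 1). pose proof (Hmin0 x y).
    rewrite <- (pow2_abs (g x - g y)). pose proof (Rabs_pos (g x - g y)). nra. }
  set (H := fun p : X * X => /2 * (b (fst p) (snd p) * s (fst p) (snd p) ^ 2)).
  assert (H0 : forall p, 0 <= H p).
  { intros [x y]; unfold H; simpl. specialize (Hb0 x y). pose proof (pow2_ge_0 (s x y)). nra. }
  assert (Hle : forall p, H p <= b (fst p) (snd p) * (g (fst p) - g (snd p)) ^ 2
                 + b (fst p) (snd p) * w (fst p) ^ 2 + b (snd p) (fst p) * w (snd p) ^ 2).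
  { intros [x y]; unfold H, s; cbn [fst snd]. rewrite (Hbs y x).
    specialize (Hb0 x y). specialize (Hmin2 x y). specialize (Hdl2 x y).
    pose proof (Hmin0 x y); pose proof (Hdl0 x y).
    assert ((Rmin (Rabs (g x - g y)) 1 + dl x y) ^ 2 <= 2 * (g x - g y) ^ 2 + 2 * (w x ^ 2 + w y ^ 2)).
    { pose proof (pow2_ge_0 (Rmin (Rabs (g x - g y)) 1 - dl x y)). nra. }
    set (S2 := (Rmin (Rabs (g x - g y)) 1 + dl x y) ^ 2) in *.
    assert (b x y * S2 <= b x y * (2 * (g x - g y) ^ 2 + 2 * (w x ^ 2 + w y ^ 2))) by (apply Rmult_le_compat_l; auto).
    lra. }
  assert (Hwsum : nnsum_le (fun p => b (fst p) (snd p) * w (fst p) ^ 2) 2).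
  { apply (group_fwd _ (fun x => w x ^ 2 * B x)).
    - intros [x y]; cbn [fst snd]. specialize (Hb0 x y). pose proof (pow2_ge_0 (w x)). nra.
    - intros x l Hl. cbv beta. cbn [fst snd].
      replace (lsum (fun y => b x y * w x ^ 2) l) with (w x ^ 2 * lsum (b x) l).
      2:{ rewrite <- lsum_scal. apply lsum_ext; intros; ring. }
      pose proof (pow2_ge_0 (w x)). specialize (HB x l Hl). nra.
    - intros K HK. eapply Rle_trans. apply lsum_le. exact Hw2.
      destruct (index_bound idx (fun k => (/2) ^ k) K Hinj) as [N HN]; auto.
      { intros; apply pow_le; lra. }
      eapply Rle_trans; [exact HN|]. pose proof (geom_sum 0 N). simpl in H1. lra. }
  set (CH := 2 * c + 4).
  assert (HH : forall P, NoDup P -> lsum H P <= CH).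
  { intros P HP. eapply Rle_trans; [apply lsum_le; exact Hle|].
    rewrite !lsum_plus.
    assert (lsum (fun p => b (fst p) (snd p) * (g (fst p) - g (snd p)) ^ 2) P <= 2 * c).
    { specialize (Hg P HP).
      replace (lsum (fun p => b (fst p) (snd p) * (g (fst p) - g (snd p)) ^ 2) P)
        with (2 * lsum (fun x => / 2 * (b (fst x) (snd x) * (g (fst x) - g (snd x)) ^ 2)) P).
      lra. rewrite <- lsum_scal. apply lsum_ext; intros; field. }
    assert (lsum (fun p => b (fst p) (snd p) * w (fst p) ^ 2) P <= 2) by (apply Hwsum; auto).
    assert (lsum (fun p => b (snd p) (fst p) * w (snd p) ^ 2) P <= 2).
    { rewrite lsum_swap. simpl. apply (Hwsum _ (nodup_swap P HP)). }
    unfold CH; lra. }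
  set (m := fun x => tsum (fun y => H (x, y))).
  assert (Hrow : forall x, nn_summable (fun y => H (x, y))).
  { intros x. exists CH. intros l Hl. rewrite <- (lsum_map H (fun y => (x, y))). apply HH.
    apply nodup_map_pair; auto. }
  assert (Hmet : is_metric s).
  { unfold s. split; [|split; [|split]].
    - intros; pose proof (Hmin0 x y); pose proof (Hdl0 x y); lra.
    - intros x y; split.
      + intros Hs. destruct (Nat.eq_dec (idx x) (idx y)) as [E|E]; [apply Hinj; auto|].
        exfalso. unfold dl in Hs. destruct Nat.eq_dec; [contradiction|].
        pose proof (Hmin0 x y). pose proof (Hw x). pose proof (Rmax_l (w x) (w y)). lra.
      + intros ->. unfold dl. destruct Nat.eq_dec; [|congruence].
        replace (g y - g y) with 0 by ring. rewrite Rabs_R0. unfold Rmin; destruct Rle_dec; lra.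
    - intros x y. rewrite Rabs_minus_sym. f_equal. unfold dl.
      destruct (Nat.eq_dec (idx x) (idx y)), (Nat.eq_dec (idx y) (idx x)); try congruence; try lia.
      apply Rmax_comm.
    - intros x y z. pose proof (rmin_tri (g x) (g y) (g z)).
      assert (dl x z <= dl x y + dl y z).
      { unfold dl. pose proof (Hw x); pose proof (Hw y); pose proof (Hw z).
        pose proof (Rmax_l (w x) (w y)). pose proof (Rmax_l (w y) (w z)). pose proof (Rmax_r (w x) (w y)).
        pose proof (Rmax_r (w y) (w z)).
        destruct (Nat.eq_dec (idx x) (idx z)); [destruct Nat.eq_dec, Nat.eq_dec; lra|].
        destruct (Nat.eq_dec (idx x) (idx y)) as [E1|E1], (Nat.eq_dec (idx y) (idx z)) as [E2|E2]; try lia.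
        - assert (x = y) by (apply Hinj; auto). subst. lra.
        - assert (y = z) by (apply Hinj; auto). subst. lra.
        - unfold Rmax at 1; destruct Rle_dec; lra. }
      lra. }
  assert (Hint : intrinsic b m s).
  { intros x l Hl. apply (tsum_ge (fun y => H (x, y))); auto. }
  assert (Hmeas : is_measure m) by (intros x; apply tsum_nonneg).
  assert (Hms : nn_summable m).
  { exists CH. intros K HK. apply group_inv; auto. }
  destruct (TBH m s Hmeas Hms Hmet Hint (/2)) as [F HF]; [lra|].
  exists (lsum (fun y => Rabs (g y)) F + 1). intros x.
  destruct (HF x) as [y [Hy Hs]].
  assert (Rabs (g y) <= lsum (fun y => Rabs (g y)) F) by (apply (lsum_In_le (fun y => Rabs (g y))); auto; intros; apply Rabs_pos).
  assert (Rabs (g x - g y) < /2).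
  { unfold s in Hs. pose proof (Hdl0 x y). unfold Rmin in Hs; destruct Rle_dec; lra. }
  pose proof (Rabs_triang (g x - g y) (g y)). replace (g x - g y + g y) with (g x) in H3 by ring. lra.
Qed.

Lemma seq_S0 N : seq 0 (S N) = seq 0 N ++ [N].
Proof. rewrite seq_S. reflexivity. Qed.

Lemma tau_lemma (mu : nat -> R) (A : R) :
  (forall k, 0 <= mu k) -> (forall N, lsum mu (seq 0 N) <= A) ->
  exists q : nat -> R, (forall k, 0 <= q k) /\
    (forall J, exists K, forall k, (K <= k)%nat -> J <= q k) /\
    (exists C, forall N, lsum (fun k => q k * mu k) (seq 0 N) <= C).
Proof.
  intros Hmu HA.
  set (S := fun N => lsum mu (seq 0 N)).
  assert (HSS : forall N, S (Datatypes.S N) = S N + mu N).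
  { intros N; unfold S. rewrite seq_S0, lsum_app. simpl. lra. }
  assert (Hmono : forall N k, S N <= S (N + k)%nat).
  { intros N k; induction k. rewrite Nat.add_0_r; lra. rewrite Nat.add_succ_r, HSS. specialize (Hmu (N+k)%nat); lra. }
  destruct (completeness (fun r => exists N, r = S N)) as [L [HL1 HL2]].
  { exists A. intros r [N ->]. apply HA. }
  { exists (S 0%nat). eauto. }
  assert (HSL : forall N, S N <= L) by (intros N; apply HL1; eauto).
  assert (Happ : forall eps, 0 < eps -> exists N, forall k, (N <= k)%nat -> L - S k < eps).
  { intros eps He. destruct (Rlt_dec (L - eps) L) as [_|]; [|lra].
    apply NNPP. intros Hn.
    assert (L <= L - eps).
    { apply HL2. intros r [N ->]. apply Rnot_lt_le. intros Hlt. apply Hn. exists N.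
      intros k Hk. specialize (Hmono N (k - N)%nat). replace (N + (k - N))%nat with k in Hmono by lia. lra. }
    lra. }
  set (rho := fun k => L - S k + (/2) ^ k).
  assert (Hrho : forall k, 0 < rho k).
  { intros k; unfold rho. specialize (HSL k). pose proof (pow_lt (/2) k). assert (0 < (/2)^k) by (apply H; lra). lra. }
  set (q := fun k => / sqrt (rho k)).
  assert (Hsq : forall k, 0 < sqrt (rho k)) by (intros; apply sqrt_lt_R0; auto).
  exists q. split; [|split].
  - intros k; unfold q. apply Rlt_le, Rinv_0_lt_compat; auto.
  - intros J. set (J' := Rmax J 1).
    assert (HJ' : 1 <= J') by apply Rmax_r.
    set (d := / (J' * J')).
    assert (Hd : 0 < d) by (unfold d; apply Rinv_0_lt_compat; nra).
    destruct (Happ (d/2)) as [N1 HN1]; [lra|].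
    destruct (pow_lt_1_zero (/2) ltac:(rewrite Rabs_pos_eq; lra) (d/2) ltac:(lra)) as [N2 HN2].
    exists (max N1 N2). intros k Hk.
    assert (rho k < d).
    { unfold rho. specialize (HN1 k ltac:(lia)). specialize (HN2 k ltac:(lia)).
      rewrite Rabs_pos_eq in HN2 by (apply pow_le; lra). lra. }
    assert (sqrt (rho k) < / J').
    { replace (/ J') with (sqrt d). apply sqrt_lt_1; auto; try lra. specialize (Hrho k); lra.
      unfold d. rewrite Rinv_mult. apply sqrt_square. left; apply Rinv_0_lt_compat; lra. }
    unfold q. assert (J <= J') by apply Rmax_l.
    assert (J' <= / sqrt (rho k)).
    { rewrite <- (Rinv_inv J'). apply Rinv_le_contravar; auto. lra. }
    lra.
  - exists (2 * sqrt (rho 0%nat)).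
    assert (Htel : forall N, lsum (fun k => q k * mu k) (seq 0 N) <= 2 * sqrt (rho 0%nat) - 2 * sqrt (rho N)).
    { induction N; [simpl; lra|].
      rewrite seq_S0, lsum_app. simpl.
      assert (q N * mu N <= 2 * sqrt (rho N) - 2 * sqrt (rho (Datatypes.S N))).
      { set (a := sqrt (rho N)). set (c := sqrt (rho (Datatypes.S N))).
        assert (Ha : 0 < a) by apply Hsq. assert (Hc : 0 < c) by apply Hsq.
        assert (Ea : a * a = rho N) by (apply sqrt_sqrt; specialize (Hrho N); lra).
        assert (Ec : c * c = rho (Datatypes.S N)) by (apply sqrt_sqrt; specialize (Hrho (Datatypes.S N)); lra).
        assert (Hdiff : mu N <= a * a - c * c).
        { rewrite Ea, Ec. unfold rho. rewrite HSS. simpl. pose proof (pow_lt (/2) N). assert (0 < (/2)^N) by (apply H; lra). lra. }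
        assert (c <= a) by (pose proof (Hmu N); destruct (Rle_lt_dec c a); auto; nra).
        assert (mu N <= a * (2 * a - 2 * c)) by (pose proof (pow2_ge_0 (a - c)); nra).
        unfold q. fold a. replace (2 * a - 2 * c) with (/ a * (a * (2 * a - 2 * c))) by (field; lra).
        rewrite (Rmult_comm (/ a)). rewrite (Rmult_comm (/ a) (a * _)).
        apply Rmult_le_compat_r; [apply Rlt_le, Rinv_0_lt_compat; auto|]. auto. }
      lra. }
    intros N. specialize (Htel N). specialize (Hsq N). lra.
Qed.

Fixpoint lastof {X} (x : X) (l : list X) : X :=
  match l with [] => x | y :: t => lastof y t end.

Lemma lastof_snoc {X} (x w : X) l : lastof x (l ++ [w]) = w.
Proof. revert x; induction l; simpl; auto. Qed.

Lemma lastof_split {X} (x u : X) l A B : x :: l = A ++ u :: B -> lastof x l = lastof u B.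
Proof.
  revert x l; induction A as [|a A IH]; intros x l E; simpl in E; inversion E; subst; [reflexivity|].
  destruct A as [|a' A']; simpl; [reflexivity|]. apply (IH a'). reflexivity.
Qed.

Lemma lastof_In {X} (x : X) l : In (lastof x l) (x :: l).
Proof. revert x; induction l; intros x; simpl; auto. destruct (IHl a); auto. Qed.

Lemma removelast_lastof {X} (x : X) l : l <> [] -> l = removelast l ++ [lastof x l].
Proof.
  revert x; induction l as [|a l IH]; intros x H; [congruence|].
  destruct l as [|a' l']; [reflexivity|].
  pose proof (IH x ltac:(discriminate)) as H2.
  change (removelast (a :: a' :: l')) with (a :: removelast (a' :: l')).
  change (lastof x (a :: a' :: l')) with (lastof x (a' :: l')).
  rewrite <- app_comm_cons. rewrite <- H2. reflexivity.
Qed.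

Lemma chain_suffix {X} (b : X -> X -> R) A B : chain b (A ++ B) -> chain b B.
Proof.
  induction A as [|a A IH]; simpl; auto. intros H. apply IH.
  destruct A; simpl in *; [destruct B; tauto|tauto].
Qed.

Lemma chain_prefix {X} (b : X -> X -> R) A B : chain b (A ++ B) -> chain b A.
Proof.
  induction A as [|a A IH]; simpl; auto. intros H.
  destruct A as [|a' A']; simpl in *; auto. split; [tauto|]. apply IH; tauto.
Qed.

Lemma chain_snoc {X} (b : X -> X -> R) x l w :
  chain b (x :: l) -> 0 < b (lastof x l) w -> chain b (x :: l ++ [w]).
Proof.
  revert x; induction l as [|y l IH]; intros x H Hb; simpl in *; auto.
  split; [tauto|]. apply IH; tauto.
Qed.

Inductive reach {X} (b : X -> X -> R) (a : X) : X -> X -> Prop :=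
| r_refl u : reach b a u u
| r_step u w v : 0 < b u w -> w <> a -> reach b a w v -> reach b a u v.

Lemma reach_trans {X} (b : X -> X -> R) a u v w : reach b a u v -> reach b a v w -> reach b a u w.
Proof. induction 1; auto. intros H2. econstructor; eauto. Qed.

Lemma reach_sym {X} (b : X -> X -> R) a u v : (forall x y, b x y = b y x) ->
  reach b a u v -> u <> a -> reach b a v u.
Proof.
  intros Hs. induction 1 as [u|u w v Hb Hw Hr IH]; intros Hu; [constructor|].
  apply (reach_trans _ _ _ w); auto. econstructor; [rewrite Hs; eauto|auto|constructor].
Qed.

Lemma chain_reach {X} (b : X -> X -> R) a u l : chain b (u :: l) -> ~ In a l -> reach b a u (lastof u l).
Proof.
  revert u; induction l as [|y l IH]; intros u Hc Ha; [constructor|].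
  destruct Hc as [Hb Hc]. econstructor; [exact Hb| |apply IH; [exact Hc|intros H; apply Ha; right; auto]].
  intros ->; apply Ha; left; auto.
Qed.

Lemma reach_path {X} (b : X -> X -> R) a u v : reach b a u v -> u <> a ->
  exists p, NoDup (u :: p) /\ chain b (u :: p) /\ lastof u p = v /\ ~ In a (u :: p).
Proof.
  induction 1 as [u|u w v Hb Hw Hr IH]; intros Hu.
  - exists []. split; [constructor; [simpl; tauto|constructor]|]. split; [simpl; auto|]. split; [reflexivity|].
    simpl. intros [H|H]; [congruence|auto].
  - destruct (IH Hw) as [p [Hnd [Hc [Hl Ha]]]].
    destruct (excluded_middle_informative (In u (w :: p))) as [Hin|Hin].
    + destruct (in_split _ _ Hin) as [A [B E]].
      exists B. rewrite E in Hnd, Hc, Ha. split; [|split; [|split]].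
      * apply NoDup_app_remove_l in Hnd; auto.
      * apply chain_suffix in Hc; auto.
      * rewrite <- Hl. symmetry. apply (lastof_split w u p A B); auto.
      * intros H; apply Ha. apply in_or_app; right; auto.
    + exists (w :: p). split; [|split; [|split]].
      * constructor; auto.
      * simpl; split; auto.
      * simpl; auto.
      * intros [H|H]; [congruence|tauto].
Qed.

Lemma tree_cycle {X} (b : X -> X -> R) (Hs : forall x y, b x y = b y x) (Ht : is_tree b)
  a x y : reach b a x y -> x <> y -> x <> a -> 0 < b a x -> 0 < b a y -> False.
Proof.
  intros Hr Hxy Hxa Hax Hay.
  destruct (reach_path b a x y Hr Hxa) as [p [Hnd [Hc [Hl Ha]]]].
  assert (Hp : p <> []) by (intros ->; simpl in Hl; congruence).
  destruct Ht as [_ Ht].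
  apply (Ht a y (x :: removelast p)).
  - rewrite <- Hl. change (x :: removelast p ++ [lastof x p]) with ((x :: removelast p) ++ [lastof x p]).
    rewrite <- app_comm_cons, <- (removelast_lastof x p Hp). split.
    + constructor; auto.
    + simpl. split; auto.
  - discriminate.
  - rewrite Hs; auto.
Qed.

Lemma path_unique {X} (b : X -> X -> R) (Hs : forall x y, b x y = b y x) (Ht : is_tree b) :
  forall l1 a l2, chain b (a :: l1) -> chain b (a :: l2) -> NoDup (a :: l1) -> NoDup (a :: l2) ->
  lastof a l1 = lastof a l2 -> l1 = l2.
Proof.
  induction l1 as [|x l1 IH]; intros a l2 Hc1 Hc2 Hn1 Hn2 Hl.
  - destruct l2 as [|y l2]; auto. exfalso. simpl in Hl.
    pose proof (lastof_In y l2). rewrite <- Hl in H. inversion Hn2; subst. auto.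
  - destruct l2 as [|y l2].
    + exfalso. simpl in Hl. pose proof (lastof_In x l1). rewrite Hl in H. inversion Hn1; subst. auto.
    + simpl in Hl. destruct (excluded_middle_informative (x = y)) as [<-|Hxy].
      * f_equal. apply (IH x); simpl in *; try tauto; auto.
        inversion Hn1; auto. inversion Hn2; auto.
      * exfalso. inversion Hn1; subst. inversion Hn2; subst.
        assert (R1 : reach b a x (lastof x l1)) by (apply chain_reach; simpl in *; tauto).
        assert (R2 : reach b a y (lastof y l2)) by (apply chain_reach; simpl in *; tauto).
        rewrite Hl in R1. apply reach_sym in R2; auto; [|intros ->; simpl in *; tauto].
        apply (tree_cycle b Hs Ht a x y); auto.
        -- eapply reach_trans; eauto.
        -- intros ->; simpl in *; tauto.
        -- simpl in Hc1; tauto.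
        -- simpl in Hc2; tauto.
Qed.

Fixpoint ps {X} (wt : X -> X -> R) (x : X) (l : list X) : R :=
  match l with [] => 0 | y :: t => wt x y + ps wt y t end.

Lemma ps_snoc {X} (wt : X -> X -> R) x l w : ps wt x (l ++ [w]) = ps wt x l + wt (lastof x l) w.
Proof. revert x; induction l; intros x; simpl; [lra|]. rewrite IHl; lra. Qed.

Lemma ps_nonneg {X} (wt : X -> X -> R) x l : (forall u v, 0 <= wt u v) -> 0 <= ps wt x l.
Proof. revert x; induction l; intros x H; simpl; [lra|]. specialize (IHl a H). specialize (H x a). lra. Qed.

Definition opath {X} (b : X -> X -> R) (o z : X) (p : list X) :=
  NoDup (o :: p) /\ chain b (o :: p) /\ lastof o p = z.

Lemma opath_exists {X} (b : X -> X -> R) (Ht : is_tree b) o z : exists p, opath b o z p.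
Proof.
  destruct (excluded_middle_informative (o = z)) as [<-|H].
  - exists []. split; [constructor; [simpl; tauto|constructor]|]. split; simpl; auto.
  - destruct Ht as [Hc _]. destruct (Hc o z H) as [mid [Hn Hch]].
    exists (mid ++ [z]). split; auto. split; auto. apply lastof_snoc.
Qed.

Lemma opath_adj {X} (b : X -> X -> R) (Hs : forall x y, b x y = b y x) (Hd : forall x, b x x = 0)
  (Ht : is_tree b) o z w pz pw :
  opath b o z pz -> opath b o w pw -> 0 < b z w -> pw = pz ++ [w] \/ pz = pw ++ [z].
Proof.
  intros [Hnz [Hcz Hlz]] [Hnw [Hcw Hlw]] Hb.
  destruct (excluded_middle_informative (In w (o :: pz))) as [Hin|Hin].
  - right. destruct (in_split _ _ Hin) as [A [B E]].
    pose proof (lastof_split o w pz A B E) as HL. rewrite Hlz in HL.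
    assert (HnB : NoDup (w :: B)) by (rewrite E in Hnz; exact (NoDup_app_remove_l _ _ Hnz)).
    assert (HcB : chain b (w :: B)) by (rewrite E in Hcz; exact (chain_suffix b _ _ Hcz)).
    destruct B as [|z' B'].
    + simpl in HL. rewrite HL in Hb. rewrite Hd in Hb. lra.
    + destruct (excluded_middle_informative (removelast (z' :: B') = [])) as [Hr|Hr].
      * assert (EB : z' :: B' = [z]).
        { rewrite (removelast_lastof w (z' :: B')) by discriminate. rewrite Hr, <- HL. reflexivity. }
        rewrite EB in E.
        destruct A as [|a A'].
        -- simpl in E. inversion E; subst. assert (pw = []).
           { apply (path_unique b Hs Ht pw o []); simpl; auto; constructor; auto; constructor. }
           subst; reflexivity.
        -- simpl in E. injection E as Ea Ep. rewrite Ep in Hcz, Hnz.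
           replace (A' ++ [w; z]) with ((A' ++ [w]) ++ [z]) in Hcz, Hnz by (rewrite <- app_assoc; auto).
           assert (pw = A' ++ [w]).
           { apply (path_unique b Hs Ht pw o (A' ++ [w])); auto.
             - rewrite app_comm_cons in Hcz. exact (chain_prefix b _ _ Hcz).
             - rewrite app_comm_cons in Hnz. exact (NoDup_app_remove_r _ _ Hnz).
             - rewrite lastof_snoc; auto. }
           rewrite Ep, H. rewrite <- app_assoc. reflexivity.
      * exfalso. destruct Ht as [Hc Ht].
        apply (Ht w z (removelast (z' :: B'))); auto.
        -- split.
           ++ rewrite HL. rewrite <- (removelast_lastof w (z' :: B')) by discriminate. auto.
           ++ rewrite HL. rewrite <- (removelast_lastof w (z' :: B')) by discriminate. auto.
  - left. apply (path_unique b Hs Ht pw o (pz ++ [w])); auto.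
    + rewrite app_comm_cons. apply chain_snoc; auto. rewrite Hlz; auto.
    + rewrite app_comm_cons. apply NoDup_app; auto.
      * constructor; auto; constructor.
      * intros a Ha [<-|[]]. auto.
    + rewrite lastof_snoc; auto.
Qed.

Lemma net_lemma {X} (s wt : X -> X -> R) (F : list X) (J : R) :
  0 <= J -> (forall x, s x x = 0) -> (forall x y z, s x z <= s x y + s y z) ->
  (forall x y, 0 <= wt x y) -> (forall x y, ~ In y F -> J * s x y <= wt x y) ->
  forall l a, exists u, (In u F \/ u = a) /\ J * s u (lastof a l) <= ps wt a l.
Proof.
  intros HJ Hs0 Htri Hwt Hlow. induction l as [|y l IH]; intros a.
  - exists a. split; [right; auto|]. simpl. rewrite Hs0. lra.
  - destruct (IH y) as [u [Hu Hle]]. simpl.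
    pose proof (Hwt a y).
    destruct Hu as [Hu| ->].
    + exists u. split; [left; auto|lra].
    + destruct (excluded_middle_informative (In y F)) as [Hy|Hy].
      * exists y. split; [left; auto|lra].
      * exists a. split; [right; auto|].
        specialize (Hlow a y Hy). specialize (Htri a y (lastof y l)).
        assert (J * s a (lastof y l) <= J * s a y + J * s y (lastof y l)) by (pose proof (Rmult_le_compat_l J _ _ HJ Htri); lra).
        lra.
Qed.

Lemma Cmod_real r : 0 <= r -> Cmod (r, 0) = r.
Proof. intros H. unfold Cmod; simpl. replace (r * (r * 1) + 0 * (0 * 1)) with (r ^ 2) by ring. apply sqrt_pow2; auto. Qed.

Lemma Cmod_sq_real u v : Cmod (Csub (u, 0) (v, 0)) ^ 2 = (u - v) ^ 2.
Proof.
  unfold Cmod, Csub; cbn [fst snd]. rewrite pow2_sqrt; [ring|]. pose proof (pow2_ge_0 (u - v)). pose proof (pow2_ge_0 (0 - 0)). lra.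
Qed.

Lemma dir2 (X : Type) (e : nat -> X) (idx : X -> nat) (He : forall x, e (idx x) = x)
  (Heinj : forall n k, e n = e k -> n = k)
  (b : X -> X -> R) (Hb : weighted_graph b) (Ht : is_tree b)
  (Hbd : forall f : X -> Cpx, finite_energy b f -> bounded_fun f)
  (m : X -> R) (s : X -> X -> R) (Hm : is_measure m) (Hms : nn_summable m)
  (Hs : is_metric s) (Hint : intrinsic b m s) : totally_bounded s.
Proof.
  destruct Hb as [Hb0 [Hbs [Hbd0 Hbr]]].
  destruct Hs as [Hs0 [Hseq [Hssym Htri]]].
  assert (Hidxinj : forall x y, idx x = idx y -> x = y).
  { intros x y E. rewrite <- (He x), <- (He y), E. auto. }
  set (o := e 0%nat).
  set (P := fun z => proj1_sig (constructive_indefinite_description _ (opath_exists b Ht o z))).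
  assert (HP : forall z, opath b o z (P z)).
  { intros z. unfold P. destruct constructive_indefinite_description; auto. }
  destruct Hms as [Mm HMm].
  set (mu := fun k => m (e k)).
  destruct (tau_lemma mu Mm) as [q [Hq0 [Hqinf [Cq HCq]]]].
  { intros k; apply Hm. }
  { intros N. unfold mu. rewrite <- (lsum_map m e). apply HMm.
    apply Injective_map_NoDup; [intros u v; apply Heinj|apply seq_NoDup]. }
  set (tau := fun k => sqrt (q k)).
  set (t := fun x y => Rmax (tau (idx x)) (tau (idx y))).
  set (wt := fun x y => s x y * t x y).
  assert (Htau0 : forall k, 0 <= tau k) by (intros; apply sqrt_pos).
  assert (Ht0 : forall x y, 0 <= t x y).
  { intros x y. unfold t. pose proof (Rmax_l (tau (idx x)) (tau (idx y))). pose proof (Htau0 (idx x)). lra. }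
  assert (Hwt0 : forall x y, 0 <= wt x y).
  { intros; unfold wt. apply Rmult_le_pos; auto. }
  assert (Hwtsym : forall x y, wt x y = wt y x).
  { intros; unfold wt, t. rewrite Hssym, Rmax_comm. auto. }
  assert (Ht2 : forall x y, t x y ^ 2 <= q (idx x) + q (idx y)).
  { intros x y. unfold t, tau. pose proof (Hq0 (idx x)). pose proof (Hq0 (idx y)).
    rewrite <- (pow2_sqrt (q (idx x))) at 2 by auto. rewrite <- (pow2_sqrt (q (idx y))) at 2 by auto.
    pose proof (sqrt_pos (q (idx x))). pose proof (sqrt_pos (q (idx y))).
    unfold Rmax; destruct Rle_dec; nra. }
  set (f := fun z => (ps wt o (P z), 0) : Cpx).
  set (G := fun p : X * X => / 2 * (b (fst p) (snd p) * s (fst p) (snd p) ^ 2)).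
  assert (HG0 : forall p, 0 <= G p).
  { intros [x y]; unfold G; cbn [fst snd]. pose proof (Hb0 x y). pose proof (pow2_ge_0 (s x y)). nra. }
  assert (Hterm : forall p, / 2 * (b (fst p) (snd p) * Cmod (Csub (f (fst p)) (f (snd p))) ^ 2)
             <= G p * q (idx (fst p)) + G (snd p, fst p) * q (idx (snd p))).
  { intros [z w]. cbn [fst snd]. unfold f. rewrite Cmod_sq_real.
    unfold G; cbn [fst snd]. rewrite (Hbs w z), (Hssym w z).
    pose proof (Hq0 (idx z)); pose proof (Hq0 (idx w)). pose proof (pow2_ge_0 (s z w)).
    destruct (Hb0 z w) as [Hpos|Hz].
    - assert (E : (ps wt o (P z) - ps wt o (P w)) ^ 2 = wt z w ^ 2).
      { destruct (opath_adj b Hbs Hbd0 Ht o z w (P z) (P w) (HP z) (HP w) Hpos) as [E|E].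
        - rewrite E, ps_snoc. destruct (HP z) as [_ [_ ->]]. ring.
        - rewrite E, ps_snoc. destruct (HP w) as [_ [_ ->]]. rewrite Hwtsym. ring. }
      rewrite E. unfold wt. specialize (Ht2 z w).
      assert (s z w ^ 2 * t z w ^ 2 <= s z w ^ 2 * (q (idx z) + q (idx w))) by (apply Rmult_le_compat_l; auto).
      assert (b z w * (s z w * t z w) ^ 2 <= b z w * (s z w ^ 2 * (q (idx z) + q (idx w)))).
      { apply Rmult_le_compat_l; [lra|]. replace ((s z w * t z w) ^ 2) with (s z w ^ 2 * t z w ^ 2) by ring. auto. }
      nra.
    - rewrite <- Hz. nra. }
  assert (Hhalf : nnsum_le (fun p => G p * q (idx (fst p))) Cq).
  { apply (group_fwd _ (fun x => q (idx x) * m x)).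
    - intros p. apply Rmult_le_pos; auto.
    - intros x l Hl. cbv beta. cbn [fst snd].
      replace (lsum (fun y => G (x, y) * q (idx x)) l) with (q (idx x) * lsum (fun y => G (x, y)) l).
      2:{ rewrite <- lsum_scal. apply lsum_ext; intros; ring. }
      apply Rmult_le_compat_l; auto. exact (Hint x l Hl).
    - intros K HK. destruct (index_bound idx (fun k => q k * mu k) K Hidxinj) as [N HN]; auto.
      { intros k; apply Rmult_le_pos; auto; apply Hm. }
      eapply Rle_trans; [|apply (HCq N)]. eapply Rle_trans; [|exact HN].
      right. apply lsum_ext. intros x _. unfold mu. rewrite He. reflexivity. }
  assert (Hfe : finite_energy b f).
  { exists (2 * Cq). intros L HL. eapply Rle_trans; [apply lsum_le; exact Hterm|].
    rewrite lsum_plus. pose proof (Hhalf L HL).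
    assert (lsum (fun p => G (snd p, fst p) * q (idx (snd p))) L <= Cq).
    { rewrite lsum_swap. cbn [fst snd]. apply (Hhalf _ (nodup_swap L HL)). }
    lra. }
  destruct (Hbd f Hfe) as [M HM].
  assert (Hf : forall z, ps wt o (P z) <= M).
  { intros z. specialize (HM z). unfold f in HM. rewrite Cmod_real in HM; auto. apply ps_nonneg; auto. }
  intros eps Heps.
  set (J := (Rabs M + 1) / eps).
  assert (HJ : 0 < J) by (unfold J; apply Rdiv_lt_0_compat; [pose proof (Rabs_pos M); lra|auto]).
  destruct (Hqinf (J ^ 2)) as [K0 HK0].
  set (F := map e (seq 0 (S K0))).
  exists F. intros z.
  assert (Hlow : forall x y, ~ In y F -> J * s x y <= wt x y).
  { intros x y Hy. unfold wt. rewrite Rmult_comm. apply Rmult_le_compat_l; auto.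
    assert (Hk : (K0 <= idx y)%nat).
    { destruct (Compare_dec.le_lt_dec K0 (idx y)); auto. exfalso. apply Hy. unfold F. rewrite <- (He y).
      apply in_map. apply in_seq. lia. }
    specialize (HK0 _ Hk). unfold t.
    assert (J <= tau (idx y)).
    { unfold tau. rewrite <- (sqrt_pow2 J) by lra. apply sqrt_le_1; auto. nra. }
    pose proof (Rmax_r (tau (idx x)) (tau (idx y))). lra. }
  assert (Hs00 : forall x, s x x = 0) by (intros x; apply Hseq; auto).
  destruct (net_lemma s wt F J ltac:(lra) Hs00 Htri Hwt0 Hlow (P z) o) as [u [Hu Hle]].
  exists u. split.
  - destruct Hu as [Hu| ->]; auto. unfold F, o. apply in_map. apply in_seq. lia.
  - destruct (HP z) as [_ [_ Hlz]]. rewrite Hlz in Hle. specialize (Hf z). rewrite Hssym.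
    assert (J * s u z <= Rabs M) by (pose proof (Rle_abs M); lra).
    assert (Rabs M < J * eps) by (unfold J; field_simplify; lra).
    destruct (Rlt_dec (s u z) eps); auto. exfalso.
    assert (J * eps <= J * s u z) by (apply Rmult_le_compat_l; lra). lra.
Qed.

Lemma Cmod_sq z : Cmod z ^ 2 = fst z ^ 2 + snd z ^ 2.
Proof. unfold Cmod. rewrite pow2_sqrt; auto. pose proof (pow2_ge_0 (fst z)); pose proof (pow2_ge_0 (snd z)); lra. Qed.

Lemma Cmod_le z : Cmod z <= Rabs (fst z) + Rabs (snd z).
Proof.
  unfold Cmod. rewrite <- (sqrt_pow2 (Rabs (fst z) + Rabs (snd z))) by (pose proof (Rabs_pos (fst z)); pose proof (Rabs_pos (snd z)); lra).
  apply sqrt_le_1.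
  - pose proof (pow2_ge_0 (fst z)); pose proof (pow2_ge_0 (snd z)); lra.
  - apply pow2_ge_0.
  - rewrite <- (pow2_abs (fst z)), <- (pow2_abs (snd z)). pose proof (Rabs_pos (fst z)); pose proof (Rabs_pos (snd z)). nra.
Qed.

Theorem mainTheorem19 (X : Type) (HX : countably_infinite X)
  (b : X -> X -> R) (Hb : weighted_graph b) (Ht : is_tree b) :
  (forall (m : X -> R) (s : X -> X -> R),
      is_measure m -> nn_summable m -> is_metric s -> intrinsic b m s ->
      totally_bounded s)
  <->
  (forall f : X -> Cpx, finite_energy b f -> bounded_fun f).
Proof.
  destruct HX as [e [Hinj Hsurj]].
  set (idx := fun x => proj1_sig (constructive_indefinite_description _ (Hsurj x))).
  assert (He : forall x, e (idx x) = x).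
  { intros x; unfold idx; destruct constructive_indefinite_description; auto. }
  assert (Hidxinj : forall x y, idx x = idx y -> x = y).
  { intros x y E. rewrite <- (He x), <- (He y), E. auto. }
  split.
  - intros TBH f [c Hc].
    assert (Hb0 : forall x y, 0 <= b x y) by apply Hb.
    assert (Hcomp : forall (g : X -> R), (forall x y, (g x - g y) ^ 2 <= Cmod (Csub (f x) (f y)) ^ 2) ->
              exists M, forall x, Rabs (g x) <= M).
    { intros g Hgle. apply (dir1_real X b Hb idx Hidxinj TBH g c).
      intros L HL. eapply Rle_trans; [|apply (Hc L HL)]. apply lsum_le. intros [x y]. cbn [fst snd].
      specialize (Hgle x y). specialize (Hb0 x y).
      assert (b x y * (g x - g y) ^ 2 <= b x y * Cmod (Csub (f x) (f y)) ^ 2) by (apply Rmult_le_compat_l; auto).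
      lra. }
    destruct (Hcomp (fun x => fst (f x))) as [M1 H1].
    { intros x y. rewrite Cmod_sq. unfold Csub; cbn [fst snd]. pose proof (pow2_ge_0 (snd (f x) - snd (f y))). lra. }
    destruct (Hcomp (fun x => snd (f x))) as [M2 H2].
    { intros x y. rewrite Cmod_sq. unfold Csub; cbn [fst snd]. pose proof (pow2_ge_0 (fst (f x) - fst (f y))). lra. }
    exists (M1 + M2). intros x. pose proof (Cmod_le (f x)). specialize (H1 x); specialize (H2 x). lra.
  - intros Hbd m s Hm Hms Hs Hint. exact (dir2 X e idx He Hinj b Hb Ht Hbd m s Hm Hms Hs Hint).
Qed.
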